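(* Let $X\in\mathbb{R}^{d\times n}$, $\rho>0$, and let $(\beta_k)_{k\ge0}$ be positive numbers with $\sum_k \frac{\beta_{k+1}}{\beta_k^2}<\infty$ and $\sum_k\frac{1}{\beta_k}<\infty$. Let $F(Z)=\log\det(I+Z^TZ)$ for $Z\in\mathbb{R}^{n\times n}$ and $$L(Z,W,Y,\beta)=F(Z)+\rho\|X-XW\|_F^2+\frac{\beta}{2}\|Z-W\|_F^2+\mathrm{Tr}(Y^T(Z-W)).$$ Let $Z_0\in\mathbb{R}^{n\times n}$, $Y_0=0$, and for $k\ge 0$ define $W_{k+1}=(\beta_k I+2\rho X^TX)^{-1}(2\rho X^TX+Y_k+\beta_k Z_k)$ (the minimizer of $W\mapsto L(Z_k,W,Y_k,\beta_k)$), let $Z_{k+1}$ be a global minimizer of $Z\mapsto L(Z,W_{k+1},Y_k,\beta_k)$, and set $Y_{k+1}=Y_k+\beta_k(Z_{k+1}-W_{k+1})$. Then the sequences $\{W_k\}$ and $\{Z_k\}$ are bounded.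
   Context: $I$ is the $n\times n$ identity matrix, $\|\cdot\|_F$ the Frobenius norm, $\mathrm{Tr}$ the trace. *)

(* Defs.v *)
From HB Require Import structures.
From Stdlib Require Import Reals Lra ClassicalEpsilon FunctionalExtensionality.
From mathcomp Require Import all_boot all_algebra.
Set Implicit Arguments. Unset Strict Implicit. Unset Printing Implicit Defensive.

Definition Req_bool (x y : R) : bool := if Req_EM_T x y then true else false.

Lemma Req_boolP : Equality.axiom Req_bool.
Proof. move=> x y; rewrite /Req_bool; case: Req_EM_T => h; by constructor. Qed.

HB.instance Definition _ := hasDecEq.Build R Req_boolP.

Definition R_find (P : pred R) (n : nat) : option R :=
  match excluded_middle_informative (exists x, P x) with
  | left h => Some (proj1_sig (constructive_indefinite_description _ h))
  | right _ => None
  end.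

Lemma R_find_some (P : pred R) n x : R_find P n = Some x -> P x.
Proof.
rewrite /R_find; case: excluded_middle_informative => // h [<-].
exact: proj2_sig (constructive_indefinite_description _ h).
Qed.

Lemma R_find_ex (P : pred R) : (exists x, P x) -> exists n, R_find P n.
Proof.
move=> h; exists 0%N; rewrite /R_find; case: excluded_middle_informative => //.
Qed.

Lemma R_find_ext (P Q : pred R) : P =1 Q -> R_find P =1 R_find Q.
Proof. move=> h; have -> : P = Q by apply: functional_extensionality. by []. Qed.

HB.instance Definition _ := hasChoice.Build R R_find_some R_find_ex R_find_ext.

Lemma R_addA : associative Rplus. Proof. move=> *; rewrite Rplus_assoc //. Qed.
Lemma R_addC : commutative Rplus. Proof. move=> *; exact: Rplus_comm. Qed.
Lemma R_add0 : left_id R0 Rplus. Proof. move=> *; exact: Rplus_0_l. Qed.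
Lemma R_addN : left_inverse R0 Ropp Rplus. Proof. move=> *; exact: Rplus_opp_l. Qed.

HB.instance Definition _ := GRing.isZmodule.Build R R_addA R_addC R_add0 R_addN.

Lemma R_mulA : associative Rmult. Proof. move=> *; rewrite Rmult_assoc //. Qed.
Lemma R_mulC : commutative Rmult. Proof. move=> *; exact: Rmult_comm. Qed.
Lemma R_mul1 : left_id R1 Rmult. Proof. move=> *; exact: Rmult_1_l. Qed.
Lemma R_mulDl : left_distributive Rmult Rplus.
Proof. move=> *; exact: Rmult_plus_distr_r. Qed.
Lemma R_one_neq0 : R1 != R0 :> R.
Proof. apply/eqP; exact: R1_neq_R0. Qed.

HB.instance Definition _ :=
  GRing.Zmodule_isComNzRing.Build R R_mulA R_mulC R_mul1 R_mulDl R_one_neq0.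

Lemma R_mulVf (x : R) : x != 0%R -> (Rinv x * x)%R = 1%R.
Proof. move/eqP=> h; exact: Rinv_l. Qed.
Lemma R_inv0 : Rinv 0%R = 0%R.
Proof. exact: Rinv_0. Qed.

HB.instance Definition _ := GRing.ComNzRing_isField.Build R R_mulVf R_inv0.

Local Open Scope ring_scope.

Definition frob_sq (m n : nat) (A : 'M[R]_(m, n)) : R :=
  \sum_(i < m) \sum_(j < n) A i j ^+ 2.

Definition Fld (n : nat) (Z : 'M[R]_n) : R :=
  ln (\det (1%:M + Z^T *m Z)).

Definition Lag (d n : nat) (X : 'M[R]_(d, n)) (rho : R)
  (Z W Y : 'M[R]_n) (beta : R) : R :=
  Fld Z + rho * frob_sq (X - X *m W) + beta / 2%:R * frob_sq (Z - W)
  + \tr (Y^T *m (Z - W)).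

(* Main.v *)
Require Import Defs.
From HB Require Import structures.
From Stdlib Require Import Reals Lra.
From mathcomp Require Import all_boot all_algebra fingroup perm.
Set Implicit Arguments. Unset Strict Implicit. Unset Printing Implicit Defensive.
Local Open Scope ring_scope.
Import GRing.Theory.

Definition subm (m n : nat) (M : 'M[R]_(m,n)) (f : {ffun 'I_n -> 'I_m}) : 'M[R]_n :=
  \matrix_(r, c) M (f r) c.
Definition Phi (m n : nat) (M : 'M[R]_(m,n)) : R :=
  \sum_(f : {ffun 'I_n -> 'I_m}) (\det (subm M f)) ^+ 2.

Lemma CB_step1 (m n : nat) (M : 'M[R]_(m,n)) :
  \det (M^T *m M) = \sum_(f : {ffun 'I_n -> 'I_m})
      (\prod_i M (f i) i) * \det (subm M f).
Proof.
rewrite /determinant.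
under eq_bigr => s _.
  under eq_bigr => i _ do rewrite !mxE.
  under eq_bigr => i _ do under eq_bigr => k _ do rewrite !mxE.
  rewrite bigA_distr_bigA mulr_sumr.
  under eq_bigr => f _ do rewrite big_split /=.
  over.
rewrite exchange_big /=; apply: eq_bigr => f _.
rewrite mulr_sumr; apply: eq_bigr => s _.
rewrite mulrCA; congr (_ * (_ * _)).
by apply: eq_bigr => i _; rewrite mxE.
Qed.

Lemma CB (m n : nat) (M : 'M[R]_(m,n)) :
  \det (M^T *m M) *+ n`! = Phi M.
Proof.
rewrite /Phi.
have E : forall f : {ffun 'I_n -> 'I_m}, \det (subm M f) ^+ 2 =
   \sum_(s : 'S_n) (-1) ^+ s * (\det (subm M f) * \prod_i M (f i) (s i)).
  move=> f; rewrite expr2 {2}/determinant mulr_sumr; apply: eq_bigr => s _.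
  rewrite mulrCA; congr (_ * (_ * _)); apply: eq_bigr => i _; by rewrite mxE.
under eq_bigr => f _ do rewrite E.
rewrite exchange_big /= -(card_Sn n) -sumr_const; apply: eq_bigr => s _.
have inj : injective (fun h : {ffun 'I_n -> 'I_m} => [ffun i => h (s i)]).
  move=> h1 h2 /ffunP H; apply/ffunP => j.
  by have := H (s^-1 j)%g; rewrite !ffunE permKV.
rewrite (reindex_inj inj) /= CB_step1; apply: eq_bigr => h _.
have -> : subm M [ffun i => h (s i)] = row_perm s (subm M h).
  by apply/matrixP => i j; rewrite !mxE ffunE.
rewrite row_permE det_mulmx det_perm.
have -> : \prod_i M ([ffun i0 => h (s i0)] i) (s i) = \prod_i M (h i) i.
  rewrite [RHS](reindex_inj (@perm_inj _ s)) /=; apply: eq_bigr => i _.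
  by rewrite ffunE.
by rewrite mulrA mulrA -expr2 sqrr_sign mul1r mulrC.
Qed.

Lemma addRE (x y : R) : GRing.add x y = Rplus x y. Proof. reflexivity. Qed.
Lemma zeroRE : (@GRing.zero R) = IZR 0. Proof. reflexivity. Qed.
Lemma mulRE (x y : R) : GRing.mul x y = Rmult x y. Proof. reflexivity. Qed.
Lemma oppRE (x : R) : GRing.opp x = Ropp x. Proof. reflexivity. Qed.
Lemma oneRE : (@GRing.one R) = IZR 1. Proof. reflexivity. Qed.
Lemma invRE (x : R) : GRing.inv x = Rinv x. Proof. reflexivity. Qed.
Lemma sqRE (x : R) : GRing.exp x 2 = Rmult x x. Proof. by rewrite expr2. Qed.
Lemma natmulRE (x : R) k : GRing.natmul x k = Rmult x (INR k).
Proof.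
elim: k => [|k IH]; first by rewrite mulr0n /= Rmult_0_r.
rewrite mulrS IH S_INR addRE Rmult_plus_distr_l Rmult_1_r Rplus_comm; reflexivity.
Qed.
Lemma natRE k : (k%:R : R) = INR k.
Proof. rewrite natmulRE; exact: Rmult_1_l. Qed.
Lemma nat2RE : (2%:R : R) = IZR 2.
Proof. rewrite natRE /=; lra. Qed.
Ltac rnorm := rewrite ?nat2RE ?(addRE, zeroRE, mulRE, oppRE, oneRE, invRE, sqRE, natmulRE).

Lemma le_addr (a b : R) : Rle 0 b -> Rle a (Rplus a b). Proof. lra. Qed.
Lemma le_add2r (a c b : R) : Rle 0 b -> Rle (Rplus a c) (Rplus a (Rplus c b)). Proof. lra. Qed.

Lemma sum_ge0 (I : finType) (P : pred I) (F : I -> R) :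
  (forall i, P i -> Rle 0 (F i)) -> Rle 0 (\sum_(i | P i) F i).
Proof.
move=> H; apply: (big_ind (fun x => Rle 0 x)) => //.
- by rnorm; lra.
- by move=> x y; rnorm; lra.
Qed.

Lemma sum_le (I : finType) (P : pred I) (F G : I -> R) :
  (forall i, P i -> Rle (F i) (G i)) -> Rle (\sum_(i | P i) F i) (\sum_(i | P i) G i).
Proof.
move=> H; apply: (big_ind2 (fun x y => Rle x y)) => //.
- by rnorm; lra.
- by move=> x1 x2 y1 y2; rnorm; lra.
Qed.

Lemma sum_sub_le (I : finType) (P : pred I) (F : I -> R) :
  (forall i, Rle 0 (F i)) -> Rle (\sum_(i | P i) F i) (\sum_i F i).
Proof.
move=> H; rewrite [X in Rle _ X](bigID P) /= addRE.
exact: le_addr (@sum_ge0 I (fun i => ~~ P i) F (fun i _ => H i)).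
Qed.

Lemma sum_term_le (I : finType) (F : I -> R) i0 :
  (forall i, Rle 0 (F i)) -> Rle (F i0) (\sum_i F i).
Proof.
move=> H; rewrite (bigD1 i0) //= addRE.
exact: le_addr (@sum_ge0 I (fun i => i != i0) F (fun i _ => H i)).
Qed.

Lemma sum_two_le (I : finType) (F : I -> R) i0 i1 : i1 != i0 ->
  (forall i, Rle 0 (F i)) -> Rle (F i0 + F i1) (\sum_i F i).
Proof.
move=> ne H; rewrite (bigD1 i0) //= (bigD1 i1) //= !addRE.
exact: le_add2r (@sum_ge0 I (fun i => (i != i0) && (i != i1)) F (fun i _ => H i)).
Qed.

Lemma sqr_ge0 (x : R) : Rle 0 (x ^+ 2). Proof. rnorm; nra. Qed.

Lemma submE (m n : nat) (M : 'M[R]_(m,n)) f r c : subm M f r c = M (f r) c.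
Proof. by rewrite mxE. Qed.

Definition Mz (n : nat) (Z : 'M[R]_n) : 'M[R]_(n + n, n) := col_mx 1%:M Z.

Lemma MzTM (n : nat) (Z : 'M[R]_n) : (Mz Z)^T *m Mz Z = 1%:M + Z^T *m Z.
Proof. by rewrite /Mz tr_col_mx mul_row_col trmx1 mul1mx. Qed.

Lemma CBZ (n : nat) (Z : 'M[R]_n) :
  Rmult (\det (1%:M + Z^T *m Z)) (INR n`!) = Phi (Mz Z).
Proof. by rewrite -CB MzTM natmulRE. Qed.

Lemma Phi_ge0 (m n : nat) (M : 'M[R]_(m, n)) : Rle 0 (Phi M).
Proof. apply: sum_ge0 => f _; exact: sqr_ge0. Qed.

Lemma Phi_lb (n : nat) (Z : 'M[R]_n) (i j : 'I_n) :
  Rle (1 + (Z i j) ^ 2) (Phi (Mz Z)).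
Proof.
pose f0 : {ffun 'I_n -> 'I_(n + n)} := [ffun r => lshift n r].
pose f1 : {ffun 'I_n -> 'I_(n + n)} :=
  [ffun r => if r == j then rshift n i else lshift n r].
have ne : f1 != f0.
  apply/eqP => /ffunP /(_ j); rewrite !ffunE eqxx => /eqP.
  by rewrite eq_rlshift.
have h0 : \det (subm (Mz Z) f0) = 1.
  have -> : subm (Mz Z) f0 = 1%:M.
    by apply/matrixP => r c; rewrite submE ffunE /Mz col_mxEu.
  exact: det1.
have h1 : \det (subm (Mz Z) f1) = Z i j.
  rewrite (expand_det_col _ j) (bigD1 j) //= big1 ?addr0.
    rewrite submE ffunE eqxx /Mz col_mxEd /cofactor.
    have -> : row' j (col' j (subm (col_mx 1%:M Z) f1)) = 1%:M.
      apply/matrixP => a b; rewrite [LHS]mxE [LHS]mxE submE ffunE.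
      rewrite eq_sym (negbTE (neq_lift j a)) col_mxEu !mxE.
      by rewrite (inj_eq (@lift_inj _ j)).
    by rewrite det1 mulr1 -signr_odd addnn odd_double expr0 mulr1.
  move=> r nrj; rewrite submE ffunE (negbTE nrj) /Mz col_mxEu mxE.
  by rewrite (negbTE nrj) mul0r.
have := @sum_two_le _ (fun f => \det (subm (Mz Z) f) ^+ 2) f0 f1 ne
  (fun f => sqr_ge0 (\det (subm (Mz Z) f))).
rewrite /Phi /= h0 h1; rnorm; move=> H; apply: Rle_trans H; right; ring.
Qed.

Lemma pert_num (a b t : R) :
  Rle ((a + t * b) ^ 2) ((1 + Rabs t) * a ^ 2 + (Rabs t + t ^ 2) * b ^ 2).
Proof.
have := Rle_0_sqr (a - b); have := Rle_0_sqr (a + b); rewrite /Rsqr => h1 h2.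
have [ht|ht] := Rle_or_lt 0 t.
  rewrite Rabs_right; [nra|lra].
rewrite Rabs_left; [nra|lra].
Qed.

Section Pert.
Variables (m n : nat) (M M' : 'M[R]_(m,n)) (p q : 'I_m) (t : R).
Hypothesis npq : p != q.
Hypothesis HM1 : forall r c, r != p -> M' r c = M r c.
Hypothesis HM2 : forall c, M' p c = M p c + t * M q c.

Let a f := \det (subm M f).
Let a' f := \det (subm M' f).
Let upd (f : {ffun 'I_n -> 'I_m}) r : {ffun 'I_n -> 'I_m} :=
  [ffun x => if x == r then q else f x].
Let b (f : {ffun 'I_n -> 'I_m}) :=
  if injectiveb f then
    (if [pick r | f r == p] is Some r then a (upd f r) else 0) else 0.

Lemma claim1 f : a' f = a f + t * b f.
Proof.
rewrite /b; case: (boolP (injectiveb f)) => [/injectiveP finj|].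
  case: pickP => [r /eqP fr|none].
    rewrite /a' /a -[X in X + _]mul1r.
    apply: (determinant_multilinear (b := 1) (c := t) (i0 := r)).
    - by apply/rowP => c; rewrite !mxE !ffunE eqxx fr HM2 mul1r.
    - apply/matrixP => x c; rewrite !mxE.
      rewrite HM1 //; apply/eqP => e; move: (neq_lift r x).
      by rewrite -(inj_eq finj) e fr eqxx.
    - apply/matrixP => x c; rewrite !mxE !ffunE eq_sym (negbTE (neq_lift r x)).
      rewrite HM1 //; apply/eqP => e; move: (neq_lift r x).
      by rewrite -(inj_eq finj) e fr eqxx.
  rewrite mulr0 addr0 /a' /a; congr (\det _).
  apply/matrixP => x c; rewrite !mxE HM1 //.
  by rewrite none.
move=> /injectivePn [x [y nxy fxy]].
rewrite mulr0 addr0 /a' /a.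
rewrite (determinant_alternate nxy); last by move=> c; rewrite !mxE fxy.
by rewrite (determinant_alternate nxy) // => c; rewrite !mxE fxy.
Qed.


Let S : {set {ffun 'I_n -> 'I_m}} :=
  [set f : {ffun 'I_n -> 'I_m} | [exists r : 'I_n, f r == p] && (q \notin codom f)].
Let phi (f : {ffun 'I_n -> 'I_m}) :=
  if [pick r | f r == p] is Some r then upd f r else f.

Lemma claimA f : Rle (b f ^+ 2) (if f \in S then a (phi f) ^+ 2 else 0).
Proof.
have H0 : forall g, Rle 0 (if f \in S then a g ^+ 2 else 0).
  by move=> g; case: ifP => _; [exact: sqr_ge0 | right].
rewrite /b /phi; case: pickP => [r /eqP fr|none]; last first.
  by rewrite if_same expr2 mulr0.
case: ifP => finj; last by rewrite expr2 mulr0.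
case: (boolP (q \in codom f)) => [/codomP [x qx] | nq].
  have nxr : x != r by apply/eqP => e; move: npq; rewrite -fr qx e eqxx.
  have -> : a (upd f r) = 0.
    rewrite /a (determinant_alternate nxr) // => c.
    by rewrite !mxE !ffunE eqxx (negbTE nxr) qx.
  by rewrite expr2 mulr0 if_same; right.
have fS : f \in S by rewrite inE nq andbT; apply/existsP; exists r; rewrite fr.
by rewrite fS; right.
Qed.

Lemma phi_inj : {in S &, injective phi}.
Proof.
move=> f1 f2; rewrite !inE => /andP [/existsP [r1 e1] nq1] /andP [/existsP [r2 e2] nq2].
rewrite /phi; case: pickP => [s1 es1|/(_ r1)]; last by rewrite e1.
case: pickP => [s2 es2|/(_ r2)]; last by rewrite e2.
move=> E.
have es : s1 = s2.
  apply/eqP; apply: contraT => ns; have := congr1 (fun g : {ffun 'I_n -> 'I_m} => g s1) E.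
  rewrite /= !ffunE eqxx (negbTE ns) => h; move: nq2; by rewrite h codom_f.
subst s2; apply/ffunP => x; case: (eqVneq x s1) => [->|nx].
  by rewrite (eqP es1) (eqP es2).
by have := congr1 (fun g : {ffun 'I_n -> 'I_m} => g x) E; rewrite /= !ffunE (negbTE nx).
Qed.

Lemma claim2 : Rle (\sum_f b f ^+ 2) (\sum_f a f ^+ 2).
Proof.
apply: Rle_trans (sum_le (P := predT) (fun f _ => claimA f)) _.
rewrite -big_mkcond /= -(big_imset (fun g => a g ^+ 2) phi_inj) /=.
apply: sum_sub_le => g; exact: sqr_ge0.
Qed.

Lemma Phi_pert : Rle (Phi M') (Rmult ((1 + Rabs t) ^ 2) (Phi M)).
Proof.
have E1 : Phi M' = \sum_f (a f + t * b f) ^+ 2.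
  by apply: eq_bigr => f _; rewrite -claim1.
have E2 : \sum_f ((1 + Rabs t) * a f ^+ 2 + (Rabs t + t * t) * b f ^+ 2)
   = (1 + Rabs t) * Phi M + (Rabs t + t * t) * \sum_f b f ^+ 2.
  by rewrite big_split /= -!mulr_sumr.
have L1 : Rle (Phi M') (\sum_f ((1 + Rabs t) * a f ^+ 2 + (Rabs t + t * t) * b f ^+ 2)).
  rewrite E1; apply: sum_le => f _.
  have := pert_num (a f) (b f) t; rnorm; rewrite /pow !Rmult_1_r; exact.
move: L1; rewrite E2; rnorm => L1.
have := claim2; rewrite -/(Phi M) => L2.
have L3 := Phi_ge0 M.
have L4 := Rabs_pos t.
apply: Rle_trans L1 _.
set u := \sum_f _ in L2 *.
set P := Phi M in L2 L3 *.
have L5 : Rle 0 (Rabs t + t * t) by nra.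
have L6 := pow2_abs t.
have := Rmult_le_compat_l _ _ _ L5 L2. nra.
Qed.

End Pert.

Ltac sring := unfold Rdiv; match goal with |- ?a = ?b => change (@eq R a b) end; ring.
Ltac sfield := match goal with |- ?a = ?b => change (@eq R a b) end; field.

From mathcomp Require Import ring.
Delimit Scope R_scope with Re.

Definition dot (m n : nat) (A B : 'M[R]_(m, n)) : R := \tr (A^T *m B).

Lemma dotE (m n : nat) (A B : 'M[R]_(m, n)) :
  dot A B = \sum_i \sum_j A i j * B i j.
Proof.
rewrite /dot /mxtrace exchange_big /=; apply: eq_bigr => j _.
by rewrite mxE; apply: eq_bigr => i _; rewrite mxE.
Qed.

Lemma frobE (m n : nat) (A : 'M[R]_(m, n)) : frob_sq A = dot A A.
Proof.
rewrite dotE /frob_sq; apply: eq_bigr => i _; apply: eq_bigr => j _.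
by rewrite expr2.
Qed.

Lemma frob_ge0 (m n : nat) (A : 'M[R]_(m, n)) : Rle 0 (frob_sq A).
Proof. apply: sum_ge0 => i _; apply: sum_ge0 => j _; exact: sqr_ge0. Qed.

Lemma dotC (m n : nat) (A B : 'M[R]_(m, n)) : dot A B = dot B A.
Proof. rewrite !dotE; apply: eq_bigr => i _; apply: eq_bigr => j _; exact: mulrC. Qed.

Lemma dotDl (m n : nat) (A1 A2 B : 'M[R]_(m, n)) : dot (A1 + A2) B = dot A1 B + dot A2 B.
Proof.
rewrite !dotE -big_split; apply: eq_bigr => i _; rewrite -big_split.
by apply: eq_bigr => j _; rewrite mxE mulrDl.
Qed.

Lemma dotZl (m n : nat) a (A B : 'M[R]_(m, n)) : dot (a *: A) B = a * dot A B.
Proof.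
rewrite !dotE mulr_sumr; apply: eq_bigr => i _; rewrite mulr_sumr.
by apply: eq_bigr => j _; rewrite mxE mulrA.
Qed.

Lemma dotNl (m n : nat) (A B : 'M[R]_(m, n)) : dot (- A) B = - dot A B.
Proof. by rewrite -scaleN1r dotZl mulN1r. Qed.

Lemma dotDr (m n : nat) (A B1 B2 : 'M[R]_(m, n)) : dot A (B1 + B2) = dot A B1 + dot A B2.
Proof. by rewrite dotC dotDl !(dotC _ A). Qed.
Lemma dotZr (m n : nat) a (A B : 'M[R]_(m, n)) : dot A (a *: B) = a * dot A B.
Proof. by rewrite dotC dotZl dotC. Qed.
Lemma dotNr (m n : nat) (A B : 'M[R]_(m, n)) : dot A (- B) = - dot A B.
Proof. by rewrite dotC dotNl dotC. Qed.

Lemma dot_mull (d m n : nat) (X : 'M[R]_(d, m)) (A : 'M[R]_(m, n)) (B : 'M[R]_(d, n)) :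
  dot (X *m A) B = dot A (X^T *m B).
Proof. by rewrite /dot trmx_mul mulmxA. Qed.

Lemma dot_delta (n : nat) (Y : 'M[R]_n) i j : dot Y (delta_mx i j) = Y i j.
Proof.
rewrite dotE (bigD1 i) //= (bigD1 j) //= big1 ?addr0.
  rewrite big1 ?addr0; first by rewrite mxE !eqxx mulr1.
  move=> i' ni; apply: big1 => j' _; by rewrite mxE (negbTE ni) mulr0.
by move=> j' nj; rewrite mxE eqxx (negbTE nj) mulr0.
Qed.

Lemma frob_pert (n : nat) (A : 'M[R]_n) i j t :
  frob_sq (A + t *: delta_mx i j) = frob_sq A + 2%:R * t * A i j + t * t.
Proof.
rewrite !frobE dotDl !dotDr !dotZl !dotZr (dotC _ A) dot_delta.
have -> : dot (delta_mx i j) (delta_mx i j) = 1 :> R by rewrite dot_delta mxE !eqxx.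
ring.
Qed.

Lemma Phi_ge1 (n : nat) (Z : 'M[R]_n) : Rle 1 (Phi (Mz Z)).
Proof.
pose f0 : {ffun 'I_n -> 'I_(n + n)} := [ffun r => lshift n r].
have h0 : \det (subm (Mz Z) f0) = 1.
  have -> : subm (Mz Z) f0 = 1%:M.
    by apply/matrixP => r c; rewrite submE ffunE /Mz col_mxEu.
  exact: det1.
have := @sum_term_le _ (fun f => \det (subm (Mz Z) f) ^+ 2) f0
  (fun f => sqr_ge0 (\det (subm (Mz Z) f))).
move=> H; apply: Rle_trans H; rewrite h0; rnorm; lra.
Qed.

Lemma fact_pos n : Rlt 0 (INR n`!).
Proof. apply: lt_0_INR; apply/ltP; exact: fact_gt0. Qed.

Definition Dz (n : nat) (Z : 'M[R]_n) : R := \det (1%:M + Z^T *m Z).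

Lemma Dz_pos (n : nat) (Z : 'M[R]_n) : Rlt 0 (Dz Z).
Proof.
have := CBZ Z; have := Phi_ge1 Z; have := fact_pos n; rewrite /Dz => h1 h2 h3.
rewrite -h3 in h2. nra.
Qed.

Lemma Dz_lb (n : nat) (Z : 'M[R]_n) i j :
  Rle (1 + Z i j ^ 2) (Rmult (Dz Z) (INR n`!)).
Proof. rewrite /Dz CBZ; exact: Phi_lb. Qed.

Lemma Mz_pert (n : nat) (Z : 'M[R]_n) i j t :
  Rle (Phi (Mz (Z + t *: delta_mx i j))) (Rmult ((1 + Rabs t) ^ 2) (Phi (Mz Z))).
Proof.
apply: (@Phi_pert _ _ _ _ (rshift n i) (lshift n j)).
- by rewrite eq_rlshift.
- move=> r c; rewrite -(splitK r); case: (split r) => k /= nr.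
    by rewrite /Mz !col_mxEu.
  rewrite /Mz !col_mxEd mxE mxE.
  have nki : k != i by apply: contra nr => /eqP ->.
  by rewrite mxE (negbTE nki) /= mulr0 addr0.
- move=> c; rewrite /Mz !col_mxEd col_mxEu !mxE eqxx /=.
  by rewrite eq_sym.
Qed.

Lemma Dz_pert (n : nat) (Z : 'M[R]_n) i j t :
  Rle (Dz (Z + t *: delta_mx i j)) (Rmult ((1 + Rabs t) ^ 2) (Dz Z)).
Proof.
have := Mz_pert Z i j t; rewrite -!CBZ -/(Dz _) -/(Dz _) => h.
have := fact_pos n => hf.
apply: (Rmult_le_reg_r _ _ _ hf); lra.
Qed.

Lemma ln_le_sub1 x : Rlt 0 x -> Rle (ln x) (x - 1).
Proof. move=> hx; have := exp_ineq1_le (ln x); rewrite exp_ln //; lra. Qed.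

Lemma ln_mono x y : Rlt 0 x -> Rle x y -> Rle (ln x) (ln y).
Proof.
move=> hx [h|->]; last by right.
left; apply: ln_increasing => //.
Qed.

Lemma Fld_pert (n : nat) (Z : 'M[R]_n) i j t :
  Rle (Fld (Z + t *: delta_mx i j)) (Fld Z + 2 * Rabs t + t * t).
Proof.
rewrite /Fld -/(Dz _) -/(Dz _).
have h1 := Dz_pert Z i j t; have h2 := Dz_pos Z; have h3 := Dz_pos (Z + t *: delta_mx i j).
have ha := Rabs_pos t.
have hq : Rlt 0 ((1 + Rabs t) ^ 2) by nra.
apply: Rle_trans (ln_mono h3 h1) _.
rewrite ln_mult //.
have := ln_le_sub1 hq; have := pow2_abs t; nra.
Qed.

Lemma Fld_lb (n : nat) (Z : 'M[R]_n) i j :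
  Rle (ln (1 + Z i j ^ 2) - ln (INR n`!)) (Fld Z).
Proof.
rewrite /Fld -/(Dz _).
have h1 := Dz_lb Z i j; have h2 := Dz_pos Z; have hf := fact_pos n.
have hz : Rlt 0 (1 + Z i j ^ 2) by nra.
have := ln_mono hz h1; rewrite ln_mult //; lra.
Qed.

Lemma dot_mulr (m n p : nat) (A : 'M[R]_(m, p)) (B : 'M[R]_(m, n)) (C : 'M[R]_(n, p)) :
  dot A (B *m C) = dot (A *m C^T) B.
Proof.
rewrite /dot mulmxA mxtrace_mulC trmx_mul trmxK mulmxA; congr (\tr _).
Qed.

Lemma frob_eq0 (m n : nat) (A : 'M[R]_(m, n)) : frob_sq A = 0 -> A = 0.
Proof.
move=> h; apply/matrixP => i j; rewrite mxE.
have h1 : Rle (A i j ^+ 2) (frob_sq A).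
  apply: Rle_trans (@sum_term_le _ (fun i => \sum_j A i j ^+ 2) i _).
    exact: (@sum_term_le _ (fun j => A i j ^+ 2) j (fun j => sqr_ge0 _)).
  move=> i'; apply: sum_ge0 => j' _; exact: sqr_ge0.
move: h1; rewrite h; rnorm => h1; nra.
Qed.

Definition Pm (d n : nat) (X : 'M[R]_(d, n)) (rho : R) : 'M[R]_n :=
  (2%:R * rho) *: (X^T *m X).

Lemma two_pos : Rlt 0 (2%:R : R).
Proof. rewrite natRE /=; lra. Qed.

Lemma A_unit (d n : nat) (X : 'M[R]_(d, n)) (rho beta : R) :
  Rlt 0 rho -> Rlt 0 beta -> (beta *: 1%:M + Pm X rho) \in unitmx.
Proof.
move=> hr hb; rewrite -row_free_unit -kermx_eq0; apply/eqP.
set A := beta *: 1%:M + Pm X rho.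
have KA := mulmx_ker A.
apply/row_matrixP => r; rewrite row0.
set u := row r (kermx A).
have uA : u *m A = 0 by rewrite /u -row_mul KA row0.
have E : dot u (u *m A) = beta * frob_sq u + (2%:R * rho) * frob_sq (u *m X^T).
  rewrite /A mulmxDr dotDr -scalemxAr mulmx1 dotZr /Pm -scalemxAr dotZr.
  by rewrite mulmxA dot_mulr !frobE.
move: E; rewrite uA.
have -> : dot u 0 = 0 by rewrite /dot mulmx0 mxtrace0.
have h1 := frob_ge0 u; have h2 := frob_ge0 (u *m X^T); have h3 := two_pos.
move=> E; apply: frob_eq0.
have : Rle 0 (2%:R * rho * frob_sq (u *m X^T)).
  rnorm; apply: Rmult_le_pos => //; nra.
move: E; rnorm => E h4.
apply: Rle_antisym; last by [].
nra.
Qed.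

Lemma Wmin (d n : nat) (X : 'M[R]_(d, n)) (rho beta : R) (Z Y Ws W' : 'M[R]_n) :
  Rlt 0 rho -> Rlt 0 beta ->
  (beta *: 1%:M + Pm X rho) *m Ws = Pm X rho + Y + beta *: Z ->
  Rle (Lag X rho Z Ws Y beta) (Lag X rho Z W' Y beta).
Proof.
move=> hr hb hopt.
set H := W' - Ws.
have -> : W' = Ws + H by rewrite /H addrC subrK.
set U := X - X *m Ws.
set V := Z - Ws.
have e1 : X - X *m (Ws + H) = U - X *m H by rewrite mulmxDr opprD addrA.
have e2 : Z - (Ws + H) = V - H by rewrite opprD addrA.
have G0 : (2%:R * rho) *: (X^T *m U) + beta *: V + Y = 0.
  have : (Pm X rho + Y + beta *: Z) - (beta *: 1%:M + Pm X rho) *m Ws = 0.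
    by rewrite hopt subrr.
  move=> <-; rewrite /U /V /Pm mulmxDl -scalemxAl mul1mx -scalemxAl mulmxBr mulmxA.
  apply/matrixP => i j; rewrite !mxE; ring.
have lin : (2%:R * rho) * dot U (X *m H) + beta * dot V H + dot Y H = 0.
  rewrite dotC dot_mull dotC -dotZl -dotZl -dotDl -dotDl G0.
  by rewrite /dot trmx0 mul0mx mxtrace0.
rewrite /Lag e1 e2 -/(dot Y _) -/(dot Y _) !frobE -/U -/V.
clearbody U V H.
rewrite !(dotDl, dotDr, dotNl, dotNr) (dotC (X *m H) U) (dotC H V).
have h1 := frob_ge0 (X *m H); have h2 := frob_ge0 H; rewrite !frobE in h1 h2.
move: lin h1 h2; set a := dot U (X *m H); set b := dot V H; set c := dot Y H.
set xx := dot (X *m H) (X *m H); set hh := dot H H.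
have h3 := two_pos.
rnorm => lin h1 h2.
have hi : Rlt 0 (/ 2) by apply: Rinv_0_lt_compat; lra.
have : Rle 0 (rho * xx) by nra.
have : Rle 0 (beta * / 2 * hh) by nra.
nra.
Qed.

Lemma Lag_Zpert (d n : nat) (X : 'M[R]_(d, n)) (rho beta : R) (Z W Y : 'M[R]_n) i j t :
  Lag X rho (Z + t *: delta_mx i j) W Y beta =
  Lag X rho Z W Y beta + (Fld (Z + t *: delta_mx i j) - Fld Z)
  + beta / 2%:R * (2%:R * t * (Z - W) i j + t * t) + t * Y i j.
Proof.
rewrite /Lag addrAC frob_pert -/(dot Y _) -/(dot Y _) (dotDr Y (Z - W) (t *: delta_mx i j)) dotZr dot_delta.
rnorm. move: (Fld _) (Fld Z) (frob_sq _) (frob_sq (Z - W)) (dot Y _) ((Z - W) i j) (Y i j). intros. sring.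
Qed.

Section RealFacts.
Local Close Scope ring_scope.
Local Open Scope R_scope.
Lemma Ynum (y b : R) : Rlt 0 b ->
  (forall t, Rle 0 (2 * Rabs t + t * t + t * y + b / 2 * (t * t))) ->
  Rle (Rabs y) 2.
Proof.
move=> hb H.
have hb2 : Rlt 0 (b + 2) by lra.
destruct (Rle_or_lt (Rabs y) 2) as [h|h]; first by [].
exfalso.
destruct (Rle_or_lt 0 y) as [hy|hy].
- rewrite Rabs_right in h; last lra.
  set s := (y - 2) / (b + 2).
  have hs : Rlt 0 s by apply: Rdiv_lt_0_compat; lra.
  have es : s * (b + 2) = y - 2 by rewrite /s; sfield; lra.
  have := H (- s); rewrite Rabs_Ropp Rabs_right; last lra.
  nra.
- rewrite Rabs_left in h; last lra.
  set s := (- y - 2) / (b + 2).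
  have hs : Rlt 0 s by apply: Rdiv_lt_0_compat; lra.
  have es : s * (b + 2) = - y - 2 by rewrite /s; sfield; lra.
  have := H s; rewrite Rabs_right; last lra.
  nra.
Qed.
End RealFacts.


Lemma Ybound_step (d n : nat) (X : 'M[R]_(d, n)) (rho beta : R) (Zs Ws Yk : 'M[R]_n) :
  Rlt 0 beta ->
  (forall Z', Rle (Lag X rho Zs Ws Yk beta) (Lag X rho Z' Ws Yk beta)) ->
  forall i j, Rle (Rabs (Yk i j + beta * (Zs i j - Ws i j))) 2.
Proof.
move=> hb hmin i j; apply: (Ynum hb) => t.
have := hmin (Zs + t *: delta_mx i j); rewrite Lag_Zpert.
have := Fld_pert Zs i j t.
rewrite [(Zs - Ws) i j]mxE [(- Ws) i j]mxE.
move: (Lag _ _ _ _ _ _) (Fld _) (Fld _) (Zs i j) (Ws i j) (Yk i j) => L F1 F2 z w y.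
rnorm; rewrite /Rdiv => h1 h2.
nra.
Qed.

Lemma Lag_Yupd (d n : nat) (X : 'M[R]_(d, n)) (rho beta beta' : R) (Z W Y : 'M[R]_n) :
  Lag X rho Z W (Y + beta *: (Z - W)) beta' =
  Lag X rho Z W Y beta + (beta' - beta) / 2%:R * frob_sq (Z - W) + beta * frob_sq (Z - W).
Proof.
rewrite /Lag -/(dot (Y + _) _) -/(dot Y _) dotDl dotZl -frobE.
rnorm; move: (Fld Z) (frob_sq (X - X *m W)) (frob_sq (Z - W)) (dot Y (Z - W)) => *; sring.
Qed.

Lemma sumcE (n : nat) (c : R) : \sum_(i < n) c = Rmult c (INR n).
Proof. by rewrite sumr_const card_ord natmulRE. Qed.

Lemma frob_ub (n : nat) (A : 'M[R]_n) (c : R) :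
  (forall i j, Rle (A i j ^+ 2) c) -> Rle (frob_sq A) (c * INR n * INR n).
Proof.
move=> H; rewrite /frob_sq.
apply: Rle_trans (sum_le (P := predT) (fun i _ => sum_le (P := predT) (fun j _ => H i j))) _.
rewrite sumcE sumcE; right; ring.
Qed.

Lemma Lag_lb (d n : nat) (X : 'M[R]_(d, n)) (rho beta : R) (Z W Y : 'M[R]_n) :
  Rlt 0 rho -> Rlt 0 beta -> (forall i j, Rle (Rabs (Y i j)) 2) ->
  Rle (Fld Z - INR n * INR n * (2 / beta)) (Lag X rho Z W Y beta).
Proof.
move=> hr hb hY.
rewrite /Lag; set D := Z - W.
have E : beta / 2%:R * frob_sq D + \tr (Y^T *m D) =
   \sum_i \sum_j (beta / 2%:R * D i j ^+ 2 + Y i j * D i j).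
  rewrite -/(dot Y _) dotE /frob_sq mulr_sumr -big_split; apply: eq_bigr => i _.
  by rewrite mulr_sumr -big_split.
have P : forall i j, Rle (- (2 / beta)) (Rplus (Rmult (beta / 2) (D i j * D i j)) (Y i j * D i j)).
  move=> i j; move: (hY i j) (D i j) => hy z.
  have hy2 : Rle (Y i j * Y i j) 4.
    have := Rabs_pos (Y i j); have := pow2_abs (Y i j); nra.
  have hi : Rlt 0 (/ beta) by apply: Rinv_0_lt_compat.
  have e2 : Rmult beta (Rinv beta) = 1 by apply: Rinv_r; lra.
  rewrite /Rdiv.
  have hsq : Rle 0 ((beta * z + Y i j) * (beta * z + Y i j)) by apply: Rle_0_sqr.
  have h5 : Rle 0 (/ beta * ((beta * z + Y i j) * (beta * z + Y i j))).
    apply: Rmult_le_pos => //; lra.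
  have h6 : Rle 0 (/ beta * (4 - Y i j * Y i j)).
    apply: Rmult_le_pos; lra.
  have e3 : (/ beta * ((beta * z + Y i j) * (beta * z + Y i j)) =
    beta * (z * z) + 2 * (Y i j * z) + / beta * (Y i j * Y i j))%Re.
    sfield; lra.
  have e4 : (beta * / 2 * (z * z) = / 2 * (beta * (z * z)))%Re by sring.
  rewrite e4; move: h5 h6; rewrite e3; move: (Rinv beta) (Y i j * Y i j) (beta * (z * z)) (Y i j * z) => a b c e.
  lra.
have L : Rle (- (2 / beta) * INR n * INR n)
   (\sum_i \sum_j (beta / 2%:R * D i j ^+ 2 + Y i j * D i j)).
  apply: Rle_trans _ (sum_le (P := predT) (fun i _ => sum_le (P := predT)
     (F := fun j => (- (2 / beta))%Re) (fun j _ => _))).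

    by rewrite sumcE sumcE; right.
  move=> i _ j _; apply: Rle_trans (P i j) _; rnorm; right; sring.
have L2 : Rle (- (2 / beta) * INR n * INR n) (beta / 2%:R * frob_sq D + \tr (Y^T *m D)).
  apply: Rle_trans L _; right; symmetry; exact: E.
have hX := frob_ge0 (X - X *m W).
move: L2 hX; rnorm => L2 hX.
have : Rle 0 (rho * frob_sq (X - X *m W)) by nra.
lra.
Qed.


Section RealFacts2.
Local Close Scope ring_scope.
Local Open Scope R_scope.

Fixpoint psum (f : nat -> R) (k : nat) : R :=
  match k with O => 0 | S k' => psum f k' + f k' end.

Lemma psumS f k : psum f (S k) = sum_f_R0 f k.
Proof. elim: k => [|k IH] /=; first lra. rewrite -IH /=; lra. Qed.

Lemma psum_le (f : nat -> R) l : (forall k, 0 <= f k) -> infinite_sum f l ->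
  forall k, psum f k <= l.
Proof.
move=> hf hl.
have hg : Un_growing (sum_f_R0 f) by move=> k /=; have := hf (S k); lra.
have hb := growing_ineq _ _ hg hl.
case=> [|k]; last by rewrite psumS.
have := hb 0%nat; have := hf 0%nat; simpl; lra.
Qed.

Lemma term_le (f : nat -> R) l : (forall k, 0 <= f k) -> infinite_sum f l ->
  forall k, f k <= l.
Proof.
move=> hf hl k; have := psum_le hf hl (S k); simpl.
have : 0 <= psum f k by elim: (k) => [|k' IH] /=; [lra | have := hf k'; lra].
lra.
Qed.

Lemma exp_mono x y : x <= y -> exp x <= exp y.
Proof. case=> [h|->]; [left; exact: exp_increasing | right; reflexivity]. Qed.

Lemma abs_le_sq z : Rabs z <= 1 + z ^ 2.
Proof.
have [h|h] := Rle_or_lt 0 z.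
  rewrite Rabs_right; nra.
rewrite Rabs_left; nra.
Qed.

End RealFacts2.

Unset Implicit Arguments.

Theorem lemma2 (d n : nat) (X : 'M[R]_(d, n)) (rho : R) (beta : nat -> R)
  (Z W Y : nat -> 'M[R]_n)
  (hrho : Rlt R0 rho)
  (hbeta : forall k, Rlt R0 (beta k))
  (hsum1 : exists l, infinite_sum
             (fun k => Rdiv (beta k.+1) (Rmult (beta k) (beta k))) l)
  (hsum2 : exists l, infinite_sum (fun k => Rinv (beta k)) l)
  (hY0 : Y 0%N = 0)
  (hW : forall k, W k.+1 =
          invmx (beta k *: 1%:M + (2%:R * rho) *: (X^T *m X))
          *m ((2%:R * rho) *: (X^T *m X) + Y k + beta k *: Z k))
  (hZ : forall k (Z' : 'M[R]_n),
          Rle (Lag X rho (Z k.+1) (W k.+1) (Y k) (beta k))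
              (Lag X rho Z' (W k.+1) (Y k) (beta k)))
  (hYs : forall k, Y k.+1 = Y k + beta k *: (Z k.+1 - W k.+1)) :
  exists M : R, forall k (i j : 'I_n),
    Rle (Rabs (W k i j)) M /\ Rle (Rabs (Z k i j)) M.
Proof.
case: hsum1 => l1 hl1; case: hsum2 => l2 hl2.
set s1 := fun k => Rdiv (beta k.+1) (Rmult (beta k) (beta k)) in hl1.
set s2 := fun k => Rinv (beta k) in hl2.
have hs1 : forall k, Rle 0 (s1 k).
  move=> k; rewrite /s1; left; apply: Rdiv_lt_0_compat; first exact: hbeta.
  have := hbeta k; nra.
have hs2 : forall k, Rle 0 (s2 k) by move=> k; left; apply: Rinv_0_lt_compat.
have hs2l : forall k, Rle (s2 k) l2 := term_le hs2 hl2.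
have hl2p : Rle 0 l2 by apply: Rle_trans (hs2l 0%N); exact: hs2.
have hl1p : Rle 0 l1 by apply: Rle_trans (hs1 0%N) (term_le hs1 hl1 0%N).
have hopt : forall k, (beta k *: 1%:M + Pm X rho) *m W k.+1 = Pm X rho + Y k + beta k *: Z k.
  by move=> k; rewrite hW mulKVmx // A_unit.
have hWmin : forall k W', Rle (Lag X rho (Z k) (W k.+1) (Y k) (beta k))
                             (Lag X rho (Z k) W' (Y k) (beta k)).
  by move=> k W'; apply: Wmin => //; exact: hopt.
have hYb : forall k i j, Rle (Rabs (Y k i j)) 2.
  case=> [|k] i j.
    rewrite hY0 mxE Rabs_R0; lra.
  have := Ybound_step (hbeta k) (hZ k) i j.
  by rewrite hYs !mxE.
have hD : forall k i j, Rle (Rabs (Z k.+1 i j - W k.+1 i j)) (4 * s2 k).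
  move=> k i j.
  have e : Y k.+1 i j = Y k i j + beta k * (Z k.+1 i j - W k.+1 i j) by rewrite hYs !mxE.
  have h1 := hYb k.+1 i j; have h2 := hYb k i j.
  move: e h1; rnorm => e h1.
  have hb := hbeta k.
  have hbe : Rle (Rabs (beta k * (Z k.+1 i j - W k.+1 i j))) 4.
    have -> : (beta k * (Z k.+1 i j - W k.+1 i j))%Re = (Y k.+1 i j - Y k i j)%Re by rewrite e; sring.
    apply: Rle_trans (Rabs_triang _ _) _; rewrite Rabs_Ropp; lra.
  rewrite Rabs_mult (Rabs_right (beta k)) in hbe; last lra.
  rewrite /s2.
  move: (Rabs _) (Rabs_pos (Z k.+1 i j - W k.+1 i j)) hbe => e' he' hbe.
  have hi : Rlt 0 (Rinv (beta k)) by apply: Rinv_0_lt_compat.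
  have ei : (beta k * Rinv (beta k) = 1)%Re by apply: Rinv_r; lra.
  have : Rle (Rinv (beta k) * (beta k * e')) (Rinv (beta k) * 4).
    by apply: Rmult_le_compat_l; lra.
  have -> : (Rinv (beta k) * (beta k * e') = e')%Re.
    by rewrite -Rmult_assoc (Rmult_comm (Rinv (beta k))) ei Rmult_1_l.
  lra.
have hfr : forall k, Rle (frob_sq (Z k.+1 - W k.+1)) (16 * (s2 k * s2 k) * INR n * INR n).
  move=> k; apply: frob_ub => i j.
  rewrite !mxE; rnorm.
  have := hD k i j; have := Rabs_pos (Z k.+1 i j - W k.+1 i j).
  have := pow2_abs (Z k.+1 i j - W k.+1 i j).
  rewrite /Rminus; set e := (Z k.+1 i j + - W k.+1 i j)%Re.
  move: (Rabs e) => a; have := hs2 k; nra.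
set Lk := fun k => Lag X rho (Z k) (W k) (Y k) (beta k).
have hstep : forall k, Rle (Lk k.+1) (Lk k + 8 * INR n * INR n * (s1 k + s2 k)).
  move=> k; rewrite /Lk hYs Lag_Yupd.
  have h1 := hZ k (Z k); have h2 := hWmin k (W k); have h3 := hfr k.
  have h4 := frob_ge0 (Z k.+1 - W k.+1).
  move: h1 h2 h3 h4; rnorm.
  move: (Lag X rho (Z k.+1) (W k.+1) (Y k) (beta k)) (Lag X rho (Z k) (W k.+1) (Y k) (beta k))
    (Lag X rho (Z k) (W k) (Y k) (beta k)) (frob_sq (Z k.+1 - W k.+1)) => L1 L2 L3 F h1 h2 h3 h4.
  have hb := hbeta k; have hb' := hbeta k.+1.
  have ei : (beta k * s2 k = 1)%Re by rewrite /s2; apply: Rinv_r; lra.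
  have es1 : (s1 k = beta k.+1 * s2 k * s2 k)%Re.
    rewrite /s1 /s2 /Rdiv Rinv_mult; sring.
  rewrite es1.
  move: (s2 k) ei h3 => u ei h3.
  have hn : Rle 0 (INR n * INR n) by have := pos_INR n; nra.
  have hA : Rle 0 ((beta k.+1 + beta k) * (16 * (u * u) * INR n * INR n - F)).
    apply: Rmult_le_pos; lra.
  have hB : (beta k * u * u = u)%Re by rewrite ei Rmult_1_l.
  move: (INR n) hn hA h3 => m hn hA h3.
  nra.
have hL : forall k, Rle (Lk k) (Lk 0%N + 8 * INR n * INR n * (psum s1 k + psum s2 k)).
  elim=> [|k IH] /=; first lra.
  apply: Rle_trans (hstep k) _.
  have hn : Rle 0 (INR n * INR n) by have := pos_INR n; nra.
  move: IH; move: (INR n) hn => m hn IH; nra.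
have hn : Rle 0 (INR n * INR n) by have := pos_INR n; nra.
set K := (Lk 0%N + 8 * INR n * INR n * (l1 + l2) + INR n * INR n * (2 * l2))%Re.
have hF : forall k, Rle (Fld (Z k)) K.
  move=> k.
  have h1 := @Lag_lb _ _ X rho (beta k) (Z k) (W k) (Y k) hrho (hbeta k) (hYb k).
  have h2 := hL k.
  have h3 := psum_le hs1 hl1 k; have h4 := psum_le hs2 hl2 k.
  have h5 := hs2l k.
  rewrite /K; rewrite -/(Lk k) in h1.
  have e : (2 / beta k = 2 * s2 k)%Re by rewrite /s2 /Rdiv.
  rewrite e in h1.
  move: (INR n * INR n)%Re hn h1 h2 => N hn h1 h2.
  rewrite -Rmult_assoc in h2 |- *.
  nra.
set Bz := exp (K + ln (INR n`!)).
have hZb : forall k i j, Rle (Rabs (Z k i j)) Bz.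
  move=> k i j.
  have h1 := Fld_lb (Z k) i j; have h2 := hF k.
  have hz : Rlt 0 (1 + Z k i j ^ 2) by have := pow2_ge_0 (Z k i j); lra.
  apply: Rle_trans (abs_le_sq (Z k i j)) _.
  rewrite -(exp_ln _ hz) /Bz; apply: exp_mono; lra.
set B0 := \sum_i \sum_j Rabs (W 0%N i j).
have hB0 : forall i j, Rle (Rabs (W 0%N i j)) B0.
  move=> i j; apply: Rle_trans (@sum_term_le _ (fun i => \sum_j Rabs (W 0%N i j)) i _).
    exact: (@sum_term_le _ (fun j => Rabs (W 0%N i j)) j (fun j => Rabs_pos _)).
  move=> i'; apply: sum_ge0 => j' _; exact: Rabs_pos.
have hB0p : Rle 0 B0.
  by apply: sum_ge0 => i _; apply: sum_ge0 => j _; exact: Rabs_pos.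
have hBz : Rlt 0 Bz by apply: exp_pos.
exists (Bz + 4 * l2 + B0)%Re => k i j; split.
  case: k => [|k].
    have := hB0 i j; lra.
  have h1 := hD k i j; have h2 := hZb k.+1 i j; have h3 := hs2l k.
  move: (W k.+1 i j) (Z k.+1 i j) h1 h2 => w z h1 h2.
  have e : (w = z - (z - w))%Re by sring.
  rewrite e; apply: Rle_trans (Rabs_triang _ _) _; rewrite Rabs_Ropp; lra.
have := hZb k i j; lra.
Qed.
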